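(* Let $0<\alpha<1$. Let $(x(t))_{t\ge 0}$ be a sequence of nonnegative reals (the measured transmission attempt rates of a station) and $(\bar{x}(t))_{t\ge0}$ a sequence of positive reals (the estimated maximum fair attempt rate). Define $p(0)=0$ and, for $t\ge 0$, $$p(t+1)=\max\Big(0,\; p(t)+\alpha\Big(\tfrac{x(t)}{\bar{x}(t)}-1\Big)\Big),\qquad P_{NACK}(t)=\min\{p(t),1\}.$$ Suppose there is a constant $c$ with $0<c<1$ such that $x(t)/\bar{x}(t)\le 1-c\,P_{NACK}(t)$ for all $t>0$. Then $\lim_{t\to\infty}p(t)=0$.
   Context: This is the penalty update of an access-point policing algorithm: $p(t)$ is the accumulated penalty of the station at step $t$ and $P_{NACK}(t)$ is the probability with which the access point suppresses acknowledgements of that station's frames at step $t$. The conclusion means that for such (well-behaved) stations the policing algorithm eventually drops no acknowledgements. *)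

(* Defs.v *)
From Stdlib Require Import Reals.
Open Scope R_scope.

Fixpoint penalty (alpha : R) (x xbar : nat -> R) (t : nat) : R :=
  match t with
  | O => 0
  | S t' => Rmax 0 (penalty alpha x xbar t' + alpha * (x t' / xbar t' - 1))
  end.

Definition P_NACK (alpha : R) (x xbar : nat -> R) (t : nat) : R :=
  Rmin (penalty alpha x xbar t) 1.

(* Main.v *)
Require Import Defs.
From Stdlib Require Import Reals Lra Lia Classical.
Open Scope R_scope.

Lemma pen_nonneg a x xb t : 0 <= penalty a x xb t.
Proof. destruct t; simpl; [lra | apply Rmax_l]. Qed.

Theorem theorem1 (alpha c : R) (x xbar : nat -> R) :
  0 < alpha < 1 ->
  (forall t, 0 <= x t) ->
  (forall t, 0 < xbar t) ->
  0 < c < 1 ->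
  (forall t : nat, (0 < t)%nat -> x t / xbar t <= 1 - c * P_NACK alpha x xbar t) ->
  Un_cv (penalty alpha x xbar) 0.
Proof.
  intros Ha Hx Hxb Hc H.
  set (p := penalty alpha x xbar).
  assert (Hp0 : forall t, 0 <= p t) by (intro; apply pen_nonneg).
  assert (Hac : 0 < alpha * c < 1).
  { split; [nra|]. nra. }
  assert (step : forall t, (0 < t)%nat ->
            p (S t) <= p t - alpha * c * Rmin (p t) 1).
  { intros t Ht. specialize (H t Ht). unfold P_NACK in H. fold p in H.
    unfold p; simpl; fold p.
    assert (Hm0 : 0 <= Rmin (p t) 1) by (apply Rmin_glb; [apply Hp0|lra]).
    assert (Hm1 := Rmin_l (p t) 1). assert (Hm2 := Rmin_r (p t) 1).
    apply Rmax_lub; nra. }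
  set (q := 1 - alpha * c).
  assert (Hsmall : forall t, (0 < t)%nat -> p t <= 1 -> p (S t) <= q * p t).
  { intros t Ht Hle. specialize (step t Ht). rewrite Rmin_left in step by lra.
    unfold q; lra. }
  assert (Hbig : forall t, (0 < t)%nat -> 1 <= p t -> p (S t) <= p t - alpha * c).
  { intros t Ht Hle. specialize (step t Ht). rewrite Rmin_right in step by lra. lra. }
  assert (HT : exists T, (0 < T)%nat /\ p T <= 1).
  { apply NNPP; intro Hn.
    assert (Hall : forall t, (0 < t)%nat -> 1 < p t).
    { intros t Ht. apply Rnot_le_lt. intro Hle. apply Hn. eauto. }
    assert (Hk : forall k, p (S k) <= p 1%nat - INR k * (alpha * c)).
    { induction k. simpl; lra.
      rewrite S_INR. assert (Hb := Hbig (S k) ltac:(lia) (Rlt_le _ _ (Hall (S k) ltac:(lia)))).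
      lra. }
    destruct (INR_unbounded (p 1%nat / (alpha * c))) as [k Hk'].
    assert (Hkk : INR k * (alpha * c) > p 1%nat).
    { apply Rmult_gt_compat_r with (r := alpha*c) in Hk'; [|lra].
      unfold Rdiv in Hk'. rewrite Rmult_assoc, Rinv_l in Hk' by lra. lra. }
    specialize (Hk k). specialize (Hp0 (S k)). lra. }
  destruct HT as [T [HT0 HT1]].
  assert (Hgeo : forall k, p (T + k)%nat <= q ^ k).
  { induction k. rewrite Nat.add_0_r; simpl; lra.
    replace (T + S k)%nat with (S (T + k)) by lia.
    assert (Hq : 0 < q < 1) by (unfold q; lra).
    assert (Hqk : forall j, 0 <= q ^ j <= 1).
    { induction j; simpl; nra. }
    assert (Hle1 : p (T + k)%nat <= 1).
    { apply Rle_trans with (q ^ k); auto. apply Hqk. }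
    apply Rle_trans with (q * p (T + k)%nat).
    - apply Hsmall; [lia | exact Hle1].
    - simpl. apply Rmult_le_compat_l; lra. }
  intros eps Heps.
  assert (Hq : Rabs q < 1) by (unfold q; rewrite Rabs_right; lra).
  destruct (pow_lt_1_zero q Hq eps Heps) as [N HN].
  exists (T + N)%nat. intros n Hn.
  unfold R_dist. rewrite Rminus_0_r. rewrite Rabs_right by (apply Rle_ge, Hp0).
  replace n with (T + (n - T))%nat by lia.
  apply Rle_lt_trans with (q ^ (n - T)); [apply Hgeo|].
  specialize (HN (n - T)%nat ltac:(lia)).
  apply Rle_lt_trans with (Rabs (q ^ (n - T))); [apply Rle_abs | exact HN].
Qed.
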